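(* For integers $N\ge 1$ and $n\ge 1$, $$B_{N,n}=n!\sum_{k=1}^{n}\binom{n+1}{k+1}\sum_{\substack{i_1+\cdots+i_k=n\\ i_1,\dots,i_k\ge 0}}\frac{(-N!)^k}{(N+i_1)!\cdots(N+i_k)!},$$ where the inner sum runs over all $k$-tuples of nonnegative integers $(i_1,\dots,i_k)$ with sum $n$.
   Context: For a positive integer $N$, the hypergeometric Bernoulli numbers $B_{N,n}$ ($n\ge 0$) are defined by $$\frac{x^N/N!}{e^x-\sum_{n=0}^{N-1}x^n/n!}=\sum_{n=0}^\infty B_{N,n}\frac{x^n}{n!}.$$ *)

(* Defs.v *)
From mathcomp Require Import all_boot all_order all_algebra.
Set Implicit Arguments. Unset Strict Implicit. Unset Printing Implicit Defensive.
Import Order.TTheory GRing.Theory Num.Theory.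
Local Open Scope ring_scope.

(* Coefficient of x^m in the formal power series  e^x - sum_{n=0}^{N-1} x^n/n!. *)
Definition hb_den_coef (R : numFieldType) (N m : nat) : R :=
  ((m`!)%:R)^-1 - (if (m < N)%N then ((m`!)%:R)^-1 else 0).

Definition hb_num_coef (R : numFieldType) (N j : nat) : R :=
  if j == N then ((N`!)%:R)^-1 else 0.

(* B is the sequence of hypergeometric Bernoulli numbers B_{N,n}:
   the formal power series identity
     (e^x - sum_{n<N} x^n/n!) * (sum_n B n x^n/n!) = x^N/N!
   holds coefficientwise (Cauchy product).  Since the constant term of the
   denominator series divided by x^N is nonzero, this determines B uniquely;
   it is the defining identity  (x^N/N!)/(e^x - ...) = sum B_{N,n} x^n/n!. *)
Definition is_hyp_bernoulli (R : numFieldType) (N : nat) (B : nat -> R) : Prop :=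
  forall j : nat,
    \sum_(i < j.+1) B i / (i`!)%:R * hb_den_coef R N (j - i) = hb_num_coef R N j.

(* Main.v *)
Require Import Defs.
From mathcomp Require Import all_boot all_order all_algebra.
From mathcomp Require Import zify.
Set Implicit Arguments. Unset Strict Implicit. Unset Printing Implicit Defensive.
Import Order.TTheory GRing.Theory Num.Theory.
Local Open Scope ring_scope.

Lemma geom_binom (R : comPzRingType) (y : R) (n : nat) :
  \sum_(j < n.+1) (1 - y) ^+ j =
  \sum_(k < n.+1) (-1) ^+ k * ('C(n.+1, k.+1))%:R * y ^+ k.
Proof.
elim: n => [|n IH].
  by rewrite !big_ord1 !expr0 bin1 !mulr1.
rewrite big_ord_recr /= IH.
have -> : \sum_(k < n.+2) (-1) ^+ k * ('C(n.+2, k.+1))%:R * y ^+ k =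
  \sum_(k < n.+2) (-1) ^+ k * ('C(n.+1, k.+1))%:R * y ^+ k +
  \sum_(k < n.+2) (-1) ^+ k * ('C(n.+1, k))%:R * y ^+ k.
  rewrite -big_split /=; apply: eq_bigr => k _.
  by rewrite binS natrD mulrDr mulrDl.
rewrite [in RHS]big_ord_recr /= bin_small // mulr0 mul0r addr0.
suff -> : (1 - y) ^+ n.+1 = \sum_(k < n.+2) (-1) ^+ k * ('C(n.+1, k))%:R * y ^+ k by [].
rewrite exprBn. apply: eq_bigr => k _.
by rewrite expr1n mulr1 mulr_natr mulrnAl.
Qed.

Lemma coef_pow_small (R : nzRingType) (p : {poly R}) (k m : nat) :
  p`_0 = 0 -> (m < k)%N -> (p ^+ k)`_m = 0.
Proof.
move=> p0; elim: k m => [//|k IH] m hm.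
rewrite exprS coefM big1 // => [[j hj]] _ /=.
case: j hj => [|j] hj; first by rewrite p0 mul0r.
by rewrite IH ?mulr0 //; rewrite ltn_subLR //; lia.
Qed.

Lemma coef_pow_poly (R : comNzRingType) (a : nat -> R) (n k : nat) :
  ((\poly_(i < n.+1) a i) ^+ k)`_n =
  \sum_(t : {ffun 'I_k -> 'I_n.+1} | (\sum_(i < k) (t i : nat))%N == n)
     \prod_(i < k) a (t i).
Proof.
rewrite poly_def.
have -> : (\sum_(i < n.+1) a i *: 'X^i) ^+ k = \prod_(j < k) (\sum_(i < n.+1) a i *: 'X^i) by rewrite prodr_const card_ord.
rewrite bigA_distr_bigA /=.
rewrite coef_sum [RHS]big_mkcond /=. apply: eq_bigr => t _.
have -> : \prod_(i < k) (a (t i) *: 'X^(t i)) =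
          (\prod_(i < k) a (t i))%:P * 'X^(\sum_(i < k) (t i : nat)).
  rewrite -prodrXr rmorph_prod -big_split /=.
  by apply: eq_bigr => i _; rewrite mul_polyC.
rewrite coefCM coefXn eq_sym; case: eqP => _; by rewrite ?mulr1 ?mulr0.
Qed.

Lemma coef_sign (R : nzRingType) (p : {poly R}) k i :
  ((-1) ^+ k * p)`_i = (-1) ^+ k * p`_i.
Proof.
elim: k => [|k IH]; first by rewrite !expr0 !mul1r.
by rewrite !exprS -mulrA !mulN1r coefN IH mulNr.
Qed.


Theorem proposition3 (R : numFieldType) (N n : nat) (B : nat -> R) :
  (1 <= N)%N -> (1 <= n)%N -> is_hyp_bernoulli N B ->
  B n = (n`!)%:R *
    \sum_(1 <= k < n.+1)
      ('C(n.+1, k.+1))%:R *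
      \sum_(t : {ffun 'I_k -> 'I_n.+1} | (\sum_(i < k) (t i : nat))%N == n)
        (- (N`!)%:R) ^+ k / \prod_(i < k) ((N + t i)`!)%:R.
Proof.
move=> N1 n1 HB.
have fn0 : forall m, (m`!)%:R != 0 :> R by move=> m; rewrite pnatr_eq0 -lt0n fact_gt0.
pose a := fun j => (N`!)%:R / ((N + j)%N`!)%:R : R.
pose b := fun i => B i / (i`!)%:R.
have Hrel : forall m, \sum_(i < m.+1) b i * a (m - i)%N = (m == 0)%:R.
  move=> m; have := HB (N + m)%N.
  rewrite -(big_mkord xpredT (fun i => B i / (i`!)%:R * hb_den_coef R N (N + m - i)%N)).
  rewrite (big_cat_nat _ (n := m.+1)) //=; last by lia.
  rewrite [X in _ + X = _]big_nat_cond [X in _ + X = _]big1 ?addr0; last first.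
    move=> i /andP[/andP[hi1 hi2] _].
    by rewrite /hb_den_coef ifT ?subrr ?mulr0 //; lia.
  rewrite big_mkord.
  have -> : \sum_(i < m.+1) B i / (i`!)%:R * hb_den_coef R N (N + m - i)%N =
            \sum_(i < m.+1) B i / (i`!)%:R * ((N + (m - i))%N`!)%:R^-1.
    apply: eq_bigr => [[i hi]] _ /=.
    rewrite /hb_den_coef ifF ?subr0 ?addnBA //; last by lia.
  move=> H.
  have -> : \sum_(i < m.+1) b i * a (m - i)%N =
     (N`!)%:R * \sum_(i < m.+1) B i / (i`!)%:R * ((N + (m - i))%N`!)%:R^-1.
    rewrite mulr_sumr; apply: eq_bigr => i _.
    by rewrite /a /b mulrCA mulrA.
  rewrite H /hb_num_coef.
  case: m {H} => [|m]; first by rewrite addn0 eqxx divff.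
  by rewrite ifF ?mulr0 //; apply/eqP; lia.
pose Ap := \poly_(i < n.+1) a i : {poly R}.
pose Bp := \poly_(i < n.+1) b i : {poly R}.
have HBA : forall m, (m <= n)%N -> (Bp * Ap)`_m = (m == 0)%:R.
  move=> m hm; rewrite coefM -(Hrel m); apply: eq_bigr => [[i hi]] _ /=.
  by rewrite !coef_poly ifT ?ifT //; lia.
pose z := 1 - Ap.
have z0 : z`_0 = 0 by rewrite coefB coef1 coef_poly /= /a addn0 divff // subrr.
pose S := \sum_(j < n.+1) z ^+ j.
have HAS : Ap * S = 1 - z ^+ n.+1.
  have -> : Ap = 1 - z by rewrite /z subKr.
  by rewrite /S -opprB mulNr -subrX1 opprB.
have HASc : forall m, (m <= n)%N -> (Ap * S)`_m = (m == 0)%:R.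
  by move=> m hm; rewrite HAS coefB coef1 coef_pow_small // subr0.
have Hbn : b n = S`_n.
  transitivity ((Bp * (Ap * S))`_n).
    rewrite coefM big_ord_recr /= subnn HASc // eqxx mulr1 coef_poly ltnSn /=.
    rewrite big1 ?add0r // => [[i hi]] _ /=.
    by rewrite HASc ?leq_subr // subn_eq0 leqNgt hi mulr0.
  rewrite mulrA coefM big_ord_recl /= HBA // mul1r subn0 big1 ?addr0 // => i _.
  by rewrite HBA // mul0r.
have -> : B n = (n`!)%:R * b n by rewrite /b mulrCA divff // mulr1.
congr (_ * _); rewrite Hbn /S geom_binom coef_sum big_ord_recl /=.
have n0 : (n == 0%N) = false by rewrite eqn0Ngt n1.
rewrite expr0 !mulr1 mul1r coefMn coef1 n0 mul0rn add0r.
rewrite big_add1 /= big_mkord; apply: eq_bigr => k _.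
rewrite /bump leq0n add1n -mulrA coef_sign mulr_natl coefMn coef_pow_poly mulrnAr mulr_natl.
congr (_ *+ _); rewrite mulr_sumr; apply: eq_bigr => t _.
rewrite [in RHS]exprNn /a big_split /= prodr_const card_ord prodfV mulrA.
congr (_ / _); apply: eq_bigr => i _.
Qed.
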